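(* Let $0<p<1/2$, let $1\le\ell\le L$ be integers, and let $\mu=2^{-n}\mathrm{Vol}(n,pn)$. Let $a,b,x_1,\dots,x_L,y_{\ell+1},\dots,y_L$ be chosen independently and uniformly at random from $\mathbb{F}_2^n$. Let $\mathcal{E}$ be the event that $\Delta(a,x_i)\le pn$ and $\Delta(b,x_i)\le pn$ for all $1\le i\le\ell$, and $\Delta(a,x_i)\le pn$ and $\Delta(b,y_i)\le pn$ for all $\ell+1\le i\le L$. Then, for all sufficiently large $n$ (with $pn$ an integer), $$\Pr[\mathcal{E}]\le\min\left(\mu^{2L-\ell+1},\ 2^{-n}\cdot\mu^{2L-\ell}\cdot C_p^L\cdot n^{L/2}\cdot(1+2^{-\alpha_p\ell})^n\right),$$ where $\alpha_p=\frac12\log_2\frac{1}{4p(1-p)}$ and $C_p>0$ is a constant depending only on $p$ for which $\frac{\mathrm{Vol}(n,pn;d)}{\mathrm{Vol}(n,pn)}\le 2^{-\alpha_p d}C_p\sqrt{n}$ for all $1\le d\le n$ and all sufficiently large $n$.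
   Context: $\Delta$ is Hamming distance on $\mathbb{F}_2^n$, $\mathrm{Vol}(n,r)=|\{y:\Delta(0^n,y)\le r\}|$, and $\mathrm{Vol}(n,pn;d)=|\{y:\Delta(0^n,y)\le pn,\ \Delta(1^d0^{n-d},y)\le pn\}|$. *)

(* Defs.v *)
From Stdlib Require Import Reals.
From mathcomp Require Import all_boot.
Set Implicit Arguments. Unset Strict Implicit. Unset Printing Implicit Defensive.
Local Open Scope R_scope.

Definition vec (n : nat) := {ffun 'I_n -> bool}.

Definition hdist n (x y : vec n) : nat := #|[pred i : 'I_n | x i != y i]|.

Definition zerov n : vec n := [ffun _ => false].
Definition onesv n (d : nat) : vec n := [ffun i : 'I_n => (i < d)%N].

Definition Vol n (r : nat) : nat := #|[pred y : vec n | (hdist (zerov n) y <= r)%N]|.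
Definition Vol2 n (r d : nat) : nat :=
  #|[pred y : vec n | (hdist (zerov n) y <= r)%N && (hdist (onesv n d) y <= r)%N]|.

(* Sample space: (a, b, (x_1..x_l), (x_{l+1}..x_L), (y_{l+1}..y_L)) *)
Definition sample n l L : finType :=
  (vec n * vec n * {ffun 'I_l -> vec n} * {ffun 'I_(L - l) -> vec n}
     * {ffun 'I_(L - l) -> vec n})%type.

Definition eventE n (r l L : nat) (w : sample n l L) : bool :=
  let: (a, b, xs1, xs2, ys) := w in
  [forall i : 'I_l, (hdist a (xs1 i) <= r)%N && (hdist b (xs1 i) <= r)%N] &&
  [forall j : 'I_(L - l), (hdist a (xs2 j) <= r)%N && (hdist b (ys j) <= r)%N].

Definition PrE n (r l L : nat) : R :=
  (INR #|[pred w : sample n l L | eventE r w]| / INR #|sample n l L|).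

Definition mu n (r : nat) : R := (INR (Vol n r) / 2 ^ n).

Definition log2 (x : R) : R := (ln x / ln 2).
Definition alpha (p : R) : R := (/ 2 * log2 (/ (4 * p * (1 - p)))).

Definition good_Cp (p C : R) : Prop :=
  (0 < C) /\
  exists N0 : nat, forall n r : nat, (N0 <= n)%N -> INR r = (p * INR n) ->
    forall d : nat, (1 <= d <= n)%N ->
      (INR (Vol2 n r d) / INR (Vol n r) <=
         Rpower 2 (- (alpha p * INR d)) * C * sqrt (INR n)).

(* Main.v *)
Require Import Defs.
From Stdlib Require Import Reals Lra.
From mathcomp Require Import all_boot.
From mathcomp Require Import Rstruct zify.
Set Implicit Arguments. Unset Strict Implicit. Unset Printing Implicit Defensive.

Section Comb.
Variable n : nat.
Local Notation V := (vec n).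

Definition vadd (u v : V) : V := [ffun i => u i (+) v i].
Definition wt (x : V) := hdist (zerov n) x.

Lemma card_inj_pre (T : finType) (f : T -> T) (P : pred T) :
  injective f -> #|[pred x | P (f x)]| = #|[pred x | P x]|.
Proof.
move=> injf; rewrite -!sum1_card [RHS](reindex_inj injf) /=.
by apply: eq_bigl => x; rewrite !inE.

Qed.

Lemma card_sumb (T : finType) (P : pred T) : #|[pred x | P x]| = \sum_x (P x : nat).
Proof.
rewrite -sum1_card big_mkcond /=; apply: eq_bigr => x _; rewrite inE.
by case: (P x).
Qed.

Lemma vaddK a : cancel (vadd^~ a) (vadd^~ a).
Proof. by move=> x; apply/ffunP => i; rewrite !ffunE; case: (x i); case: (a i). Qed.

Lemma vadd_inj a : injective (vadd^~ a).
Proof. exact: can_inj (vaddK a). Qed.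

Lemma hdist_sym (x y : V) : hdist x y = hdist y x.
Proof. by apply: eq_card => i; rewrite !inE eq_sym. Qed.

Lemma hdist_tr (a x y : V) : hdist (vadd x a) (vadd y a) = hdist x y.
Proof. by apply: eq_card => i; rewrite !inE !ffunE; case: (x i); case: (y i); case: (a i). Qed.

Lemma hdist_wt (a x : V) : hdist a x = wt (vadd x a).
Proof. by apply: eq_card => i; rewrite !inE !ffunE; case: (x i); case: (a i). Qed.

Lemma ball_card r (a : V) : #|[pred x | (hdist a x <= r)%N]| = Vol n r.
Proof.
rewrite /Vol -(card_inj_pre (fun y => (hdist (zerov n) y <= r)%N) (@vadd_inj a)).
by apply: eq_card => x; rewrite !inE hdist_wt.
Qed.

Lemma wt_le x : (wt x <= n)%N.
Proof. by rewrite /wt /hdist; apply: leq_trans (max_card _) _; rewrite card_ord. Qed.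

Lemma wtE x : wt x = #|[pred i | x i]|.
Proof. by apply: eq_card => i; rewrite !inE /zerov ffunE; case: (x i). Qed.

Lemma perm_exists (c : V) : exists f : 'I_n -> 'I_n,
  injective f /\ forall i, c (f i) = (i < wt c)%N.
Proof.
set s := enum [pred i | c i] ++ enum [pred i | ~~ c i].
have ss : size s = n.
  by rewrite size_cat -!cardE (cardC [pred i | c i]) card_ord.
have us : uniq s.
  rewrite cat_uniq !enum_uniq /= andbT; apply/hasPn => i.
  by rewrite !mem_enum !inE => /negbTE ->.
exists (fun i => nth i s i); split.
  move=> i j e; apply: val_inj; apply/eqP.
  have hi : (i < size s)%N by rewrite ss.
  have hj : (j < size s)%N by rewrite ss.
  rewrite (set_nth_default i j hj) in e.
  by rewrite -(nth_uniq i hi hj us) e.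
move=> i; have hi : (i < size s)%N by rewrite ss.
rewrite wtE cardE /s nth_cat.
case: ifP => h.
  by have := mem_nth i h; rewrite mem_enum inE.
have h2 : (i - size (enum [pred i | c i]) < size (enum [pred i | ~~ c i]))%N.
  move: hi; rewrite /s size_cat => hi.
  by rewrite ltn_subLR // leqNgt h.
by have := mem_nth i h2; rewrite mem_enum inE => /negbTE.
Qed.

Definition V2 (c : V) r := #|[pred x | (wt x <= r)%N && (hdist c x <= r)%N]|.

Lemma V2_Vol2 r c : V2 c r = Vol2 n r (wt c).
Proof.
have [f [injf hf]] := perm_exists c.
have [g fg gf] := injF_bij injf.
pose G (x : V) : V := [ffun i => x (f i)].
have injG : injective G.
  move=> x y /ffunP e; apply/ffunP => j; have := e (g j); rewrite !ffunE gf //.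
rewrite /Vol2 -(card_inj_pre
  (fun y => (hdist (zerov n) y <= r)%N && (hdist (onesv n (wt c)) y <= r)%N) injG).
apply: eq_card => x; rewrite !inE.
have -> : hdist (zerov n) (G x) = wt x.
  rewrite /wt /hdist -(card_inj_pre (fun i => zerov n i != x i) injf).
  by apply: eq_card => i; rewrite !inE !ffunE.
have -> : hdist (onesv n (wt c)) (G x) = hdist c x.
  rewrite /hdist -(card_inj_pre (fun i => c i != x i) injf).
  by apply: eq_card => i; rewrite !inE !ffunE hf.
by [].
Qed.

Lemma V2_tr r (a b : V) : #|[pred x | (hdist a x <= r)%N && (hdist b x <= r)%N]|
   = Vol2 n r (hdist a b).
Proof.
rewrite hdist_wt -V2_Vol2 /V2.
rewrite -(card_inj_pre (fun y => (wt y <= r)%N && (hdist (vadd b a) y <= r)%N) (@vadd_inj a)).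
apply: eq_card => x; rewrite !inE -hdist_wt.
rewrite -{1}(hdist_tr a b x) //.
Qed.

Lemma Vol2_0 r : Vol2 n r 0 = Vol n r.
Proof.
apply: eq_card => x; rewrite !inE.
have -> : onesv n 0 = zerov n by apply/ffunP => i; rewrite !ffunE.
by rewrite andbb.
Qed.

Lemma Vol2_le r d : (Vol2 n r d <= Vol n r)%N.
Proof.
rewrite /Vol2 /Vol !card_sumb; apply: leq_sum => x _.
by case: (_ <= r)%N; case: (_ <= r)%N.
Qed.

Lemma Vol_pos r : (0 < Vol n r)%N.
Proof.
apply/card_gt0P; exists (zerov n); rewrite inE.
have -> : hdist (zerov n) (zerov n) = 0%N.
  by apply: eq_card0 => i; rewrite !inE eqxx.
by [].
Qed.

Lemma sumV2 r : (\sum_c Vol2 n r (wt c) = Vol n r * Vol n r)%N.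
Proof.
rewrite (eq_bigr (fun c => V2 c r)); last by move=> c _; rewrite V2_Vol2.
rewrite /V2 (eq_bigr (fun c => \sum_x ((wt x <= r)%N * (hdist c x <= r)%N))%N); last first.
  move=> c _; rewrite card_sumb; apply: eq_bigr => x _.
  by case: (_ <= r)%N; case: (_ <= r)%N.
rewrite exchange_big /=.
rewrite (eq_bigr (fun x => (wt x <= r)%N * Vol n r)%N); last first.
  move=> x _; rewrite -big_distrr /=; congr (_ * _)%N.
  rewrite -card_sumb -(ball_card r x); apply: eq_card => c; rewrite !inE hdist_sym //.
by rewrite -big_distrl /= -card_sumb.
Qed.

End Comb.

Lemma card_vec n : #|vec n| = (2 ^ n)%N.
Proof. by rewrite /vec card_ffun card_bool card_ord. Qed.

Lemma card_sample n l L : #|sample n l L| =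
  (2^n * 2^n * (2^n)^l * (2^n)^(L-l) * (2^n)^(L-l))%N.
Proof. by rewrite /sample !card_prod !card_ffun !card_ord card_bool. Qed.

Lemma sum_pair (I J : finType) (G : I * J -> nat) :
  (\sum_(p : I * J) G p = \sum_i \sum_j G (i, j))%N.
Proof. by rewrite pair_bigA; apply: eq_bigr => -[]. Qed.

Lemma forall_prod (I : finType) (P : pred I) :
  nat_of_bool [forall i, P i] = (\prod_i (P i : nat))%N.
Proof.
case: (pickP (predC P)) => [i Hi | H].
  rewrite (bigD1 i) //= (negbTE Hi) mul0n.
  suff -> : [forall i, P i] = false by [].
  by apply/negbTE/negP => /forallP /(_ i); rewrite (negbTE Hi).
have -> : [forall i, P i] by apply/forallP => i; have := H i; rewrite inE => /negbFE.
rewrite big1 // => i _; have := H i; rewrite inE => /negbFE ->. by [].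
Qed.

Lemma sum_ffun_forall (I J : finType) (P : pred J) :
  (\sum_(f : {ffun I -> J}) [forall i, P (f i)] = #|[pred x | P x]| ^ #|I|)%N.
Proof.
rewrite (eq_bigr (fun f : {ffun I -> J} => \prod_i (P (f i) : nat))%N); last first.
  by move=> f _; rewrite forall_prod.
rewrite -(bigA_distr_bigA (fun _ (j : J) => (P j : nat))) /=.
by rewrite card_sumb prod_nat_const.
Qed.

Lemma eventE_split n r l L a b (xs1 : {ffun 'I_l -> vec n})
  (xs2 ys : {ffun 'I_(L - l) -> vec n}) :
  nat_of_bool (eventE r (a, b, xs1, xs2, ys)) =
  ([forall i, (hdist a (xs1 i) <= r) && (hdist b (xs1 i) <= r)] *
   ([forall j, hdist a (xs2 j) <= r] * [forall j, hdist b (ys j) <= r]))%N.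
Proof.
rewrite /eventE.
case: [forall i, _]; case: (boolP [forall j, _ && _]) => H.
- have ->: [forall j, hdist a (xs2 j) <= r] by apply/forallP => j; have /andP[] := forallP H j.
  have ->: [forall j, hdist b (ys j) <= r] by apply/forallP => j; have /andP[] := forallP H j.
  by [].
- case: (boolP [forall j, hdist a (xs2 j) <= r]) => H1; last by rewrite mul0n.
  case: (boolP [forall j, hdist b (ys j) <= r]) => H2; last by rewrite muln0.
  by case/negP: H; apply/forallP => j; rewrite (forallP H1 j) (forallP H2 j).
- by [].
- by [].
Qed.

Lemma count_event n r l L : #|[pred w : sample n l L | eventE r w]| =
  (2^n * (\sum_(c : vec n) Vol2 n r (wt c) ^ l) * Vol n r ^ (L-l) * Vol n r ^ (L-l))%N.
Proof.
rewrite card_sumb !sum_pair.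
rewrite (eq_bigr (fun a => \sum_(b : vec n) (Vol2 n r (hdist a b) ^ l * Vol n r ^ (L-l) * Vol n r ^ (L-l)))%N); last first.
  move=> a _; apply: eq_bigr => b _.
  under eq_bigr => xs1 _ do under eq_bigr => xs2 _ do under eq_bigr => ys _ do rewrite eventE_split.
  under eq_bigr => xs1 _ do under eq_bigr => xs2 _ do rewrite -big_distrr /= -big_distrr /=.
  under eq_bigr => xs1 _ do rewrite -big_distrr /= -big_distrl /=.
  rewrite -big_distrl /=.
  rewrite (sum_ffun_forall _ (fun x => (hdist a x <= r) && (hdist b x <= r))).
  rewrite (sum_ffun_forall _ (fun x => (hdist a x <= r))).
  rewrite (sum_ffun_forall _ (fun x => (hdist b x <= r))).
  rewrite !card_ord !ball_card.
  by rewrite V2_tr mulnA.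
rewrite (eq_bigr (fun a => (\sum_(c : vec n) Vol2 n r (wt c) ^ l) * Vol n r ^ (L-l) * Vol n r ^ (L-l)))%N.
  by rewrite sum_nat_const card_vec !mulnA.
move=> a _; rewrite -!big_distrl /=; congr (_ * _ * _)%N.
rewrite (reindex_inj (@vadd_inj n a)) /=.
by apply: eq_bigr => c _; rewrite hdist_wt vaddK.
Qed.

Open Scope R_scope.

Lemma iter_pow (t : R) k : iter k (Rmult t) 1 = t ^ k.
Proof. by elim: k => //= k ->. Qed.

Lemma prod_if (I : finType) (P : pred I) (t : R) :
  \big[Rmult/1]_(i : I) (if P i then t else 1) = t ^ #|[pred i | P i]|.
Proof.
rewrite -big_mkcond /= -iter_pow -big_const; apply: eq_bigl => i; by rewrite inE.
Qed.

Lemma sum_tw n (t : R) : \big[Rplus/0]_(c : vec n) t ^ wt c = (1 + t) ^ n.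
Proof.
rewrite (eq_bigr (fun c : vec n => \big[Rmult/1]_(i : 'I_n) (if c i then t else 1)));
  last by move=> c _; rewrite prod_if wtE.
rewrite -(bigA_distr_bigA (fun (_ : 'I_n) (b : bool) => if b then t else 1)) /=.
rewrite (eq_bigr (fun _ => 1 + t)); last by move=> i _; rewrite big_bool /=; lra.
by rewrite big_const card_ord iter_pow.
Qed.

Lemma INR_expn m k : INR (m ^ k)%N = INR m ^ k.
Proof. elim: k => [|k IH]; first by rewrite expn0. by rewrite expnS mult_INR IH. Qed.

Lemma INR_sum (I : finType) (F : I -> nat) :
  INR (\sum_i F i)%N = \big[Rplus/0]_i INR (F i).
Proof. by rewrite (big_morph INR plus_INR (erefl _)). Qed.

Lemma sum_le (I : finType) (F G : I -> R) : (forall i, F i <= G i) ->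
  \big[Rplus/0]_i F i <= \big[Rplus/0]_i G i.
Proof.
move=> H; apply: (big_ind2 (fun x y => x <= y)); first lra.
  by move=> ? ? ? ? ? ?; lra.
by move=> i _; apply: H.
Qed.

Lemma term_bound (w v q C sn t K : R) (l d : nat) (alpha : R) :
  0 <= w -> 0 < v -> 0 <= C * sn -> 1 <= K -> (C * sn) ^ l <= K ->
  t = Rpower 2 (- (alpha * INR l)) ->
  (d = 0%N -> w = v) ->
  ((1 <= d)%N -> w / v <= Rpower 2 (- (alpha * INR d)) * C * sn) ->
  w ^ l <= v ^ l * K * t ^ d.
Proof.
move=> w0 v0 Cs0 K1 CK -> h0 h1.
case: d h0 h1 => [|d] h0 h1.
  rewrite h0 //= Rmult_1_r; have := pow_le v l (Rlt_le _ _ v0) => ?; nra.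
have q0 : 0 <= w / v by apply: Rmult_le_pos => //; apply: Rlt_le; apply: Rinv_0_lt_compat.
have := h1 is_true_true => hq.
have -> : w = v * (w / v) by field; lra.
rewrite Rpow_mult_distr.
have E : Rpower 2 (- (alpha * INR d.+1)) ^ l = Rpower 2 (- (alpha * INR l)) ^ d.+1.
  rewrite -!Rpower_pow; try by apply: exp_pos.
  by rewrite !Rpower_mult; congr Rpower; ring.
have h2 : (w / v) ^ l <= Rpower 2 (- (alpha * INR d.+1)) ^ l * (C * sn) ^ l.
  rewrite -Rpow_mult_distr; apply: pow_incr; split => //; by rewrite -Rmult_assoc.
rewrite E in h2.
have p0 : 0 <= Rpower 2 (- (alpha * INR l)) ^ d.+1 by apply: pow_le; apply: Rlt_le; apply: exp_pos.
have p1 : 0 <= v ^ l by apply: pow_le; lra.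
have : (w / v) ^ l <= Rpower 2 (- (alpha * INR l)) ^ d.+1 * K.
  apply: (Rle_trans _ _ _ h2); apply: Rmult_le_compat_l => //.
move=> h3; have := Rmult_le_compat_l _ _ _ p1 h3; lra.
Qed.

Lemma leq_expn_base m1 m2 k : (m1 <= m2)%N -> (m1 ^ k <= m2 ^ k)%N.
Proof. move=> h; elim: k => // k IH; rewrite !expnS leq_mul //. Qed.

Lemma S_bound1 n r l : (1 <= l)%N ->
  (\sum_(c : vec n) Vol2 n r (wt c) ^ l <= Vol n r ^ (l + 1))%N.
Proof.
move=> l1.
apply: (@leq_trans (\sum_(c : vec n) Vol2 n r (wt c) * Vol n r ^ (l - 1))%N).
  apply: leq_sum => c _.
  have -> : l = (l - 1).+1 by lia.
  by rewrite expnS subSS subn0 leq_mul // leq_expn_base // Vol2_le.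
rewrite -big_distrl /= sumV2.
have -> : (l + 1 = (l - 1) + 2)%N by lia.
by rewrite expnD mulnC expnS expn1.
Qed.

Lemma pow_div (x y : R) k : y <> 0 -> (x / y) ^ k = x ^ k / y ^ k.
Proof. move=> y0; by rewrite /Rdiv Rpow_mult_distr pow_inv. Qed.

Unset Implicit Arguments.
Theorem lemma10 (p : R) (l L : nat) (C : R) :
  (0 < p < / 2) -> (1 <= l <= L)%N -> good_Cp p C ->
  exists N : nat, forall n r : nat, (N <= n)%N -> INR r = (p * INR n) ->
    (PrE n r l L <=
      Rmin (mu n r ^ (2 * L - l + 1))
           (/ 2 ^ n * mu n r ^ (2 * L - l) * C ^ L
              * Rpower (INR n) (INR L / 2)
              * (1 + Rpower 2 (- (alpha p * INR l))) ^ n)).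
Proof.
move=> [p0 p2] /andP[l1 lL] [C0 [N0 HC]].
have [N1 HN1] := INR_unbounded (/ (C * C)).
exists (N0 + N1 + 1)%N => n r Hn Hr.
have nN0 : (N0 <= n)%N by lia.
have nN1 : INR N1 <= INR n by apply: le_INR; apply/leP; lia.
have npos : 0 < INR n by apply: lt_0_INR; apply/ltP; lia.
set sn := sqrt (INR n).
have sn0 : 0 < sn by apply: sqrt_lt_R0.
have CC : C * C * INR n > 1.
  have : C * C * / (C * C) = 1 by field; lra.
  have h0 : 0 < C * C by nra.
  have h1 : INR n - / (C * C) > 0 by lra.
  have := Rmult_lt_0_compat _ _ h0 h1.
  rewrite Rmult_minus_distr_l => h2 e; lra.
have Csn : 1 <= C * sn.
  have : (C * sn) * (C * sn) = C * C * INR n.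
    have := sqrt_sqrt (INR n) (Rlt_le _ _ npos); rewrite -/sn => e.
    by rewrite -e; ring.
  have : 0 < C * sn by apply: Rmult_lt_0_compat.
  nra.
have KE : C ^ L * Rpower (INR n) (INR L / 2) = (C * sn) ^ L.
  rewrite Rpow_mult_distr; congr (_ * _).
  rewrite /sn -Rpower_sqrt // -Rpower_pow; last by apply: exp_pos.
  by rewrite Rpower_mult; congr Rpower; field.
set K := C ^ L * Rpower (INR n) (INR L / 2).
have K1 : 1 <= K by rewrite /K KE; apply: pow_R1_Rle.
have CK : (C * sn) ^ l <= K by rewrite /K KE; apply: Rle_pow => //; apply/leP.
set t := Rpower 2 (- (alpha p * INR l)).
set v := INR (Vol n r).
have v0 : 0 < v by apply: lt_0_INR; apply/ltP; apply: Vol_pos.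
have HS2 : INR (\sum_(c : vec n) Vol2 n r (wt c) ^ l)%N <= v ^ l * K * (1 + t) ^ n.
  rewrite INR_sum -sum_tw big_distrr /=; apply: sum_le => c.
  rewrite INR_expn.
  apply: (@term_bound _ _ (0) C sn t K l (wt c) (alpha p)) => //.
  - exact: pos_INR.
  - by apply: Rmult_le_pos; lra.
  - by move=> ->; rewrite Vol2_0.
  - by move=> h; apply: HC => //; rewrite h wt_le.
have HS1 : INR (\sum_(c : vec n) Vol2 n r (wt c) ^ l)%N <= v ^ (l + 1).
  rewrite /v -INR_expn; apply: le_INR; apply/leP; exact: S_bound1.
move: HS1 HS2; set s := INR _ => HS1 HS2.
rewrite /PrE count_event card_sample !mult_INR !INR_expn -/s -/v.
have -> : INR 2 = 2 by simpl; ring.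
rewrite /mu -/v.
set P := 2 ^ n.
have P0 : 0 < P by apply: pow_lt; lra.
have -> : (2 * L - l + 1 = (l + 1) + (L - l) + (L - l))%N by lia.
have -> : (2 * L - l = l + (L - l) + (L - l))%N by lia.
rewrite !pow_add !pow_div; try lra.
have Pl : 0 < P ^ l by apply: pow_lt.
have Pm : 0 < P ^ (L - l) by apply: pow_lt.
have P1 : 0 < P ^ 1 by apply: pow_lt.
have vm : 0 <= v ^ (L - l) by apply: pow_le; lra.
set B := v ^ (L - l) / P ^ (L - l) * (v ^ (L - l) / P ^ (L - l)).
have B0 : 0 <= B.
  rewrite /B; apply: Rmult_le_pos; apply: Rmult_le_pos => //;
  apply: Rlt_le; apply: Rinv_0_lt_compat => //.
have -> : P * s * v ^ (L - l) * v ^ (L - l) / (P * P * P ^ l * P ^ (L - l) * P ^ (L - l))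
   = / P * (s / P ^ l) * B by rewrite /B; field; lra.
apply: Rmin_glb.
- have -> : v ^ l / P ^ l * (v ^ 1 / P ^ 1) * (v ^ (L - l) / P ^ (L - l)) * (v ^ (L - l) / P ^ (L - l))
     = / P * ((v ^ l * v) / P ^ l) * B by rewrite /B; simpl; field; lra.
  apply: Rmult_le_compat_r => //; apply: Rmult_le_compat_l.
    by apply: Rlt_le; apply: Rinv_0_lt_compat.
  apply: Rmult_le_compat_r; first by apply: Rlt_le; apply: Rinv_0_lt_compat.
  by move: HS1; rewrite pow_add /=; lra.
- have -> : / P * (v ^ l / P ^ l * (v ^ (L - l) / P ^ (L - l)) * (v ^ (L - l) / P ^ (L - l))) *
      C ^ L * Rpower (INR n) (INR L / 2) * (1 + t) ^ n
     = / P * ((v ^ l * K * (1 + t) ^ n) / P ^ l) * B by rewrite /B /K; field; lra.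
  apply: Rmult_le_compat_r => //; apply: Rmult_le_compat_l.
    by apply: Rlt_le; apply: Rinv_0_lt_compat.
  apply: Rmult_le_compat_r; first by apply: Rlt_le; apply: Rinv_0_lt_compat.
  exact: HS2.
Qed.
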